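(* Let $q=4$, $B=A$, $|A|=m-1$, and put $\theta=2^{4m+2|C|-3}$. Then $\mathcal C_{\overline{\mathcal N}_2}$ is a projective $3$-weight code over $\mathbb F_4$ with parameters $[\theta,\ 2m+|C|,\ \theta/2]$ whose nonzero Hamming weights are $w_1=\theta/2$, $w_2=3\theta/4$, $w_3=\theta$ with frequencies $6$, $4^{2m+|C|}-16$ and $9$, respectively. In particular $w_1+w_2+w_3=\frac{9}{4}\theta$.
   Context: $\mathbb F_4$ is the field with four elements (so $q=4$), $\mathbb F_4^*=\mathbb F_4\setminus\{0\}$, $m\ge2$, $[m]=\{1,\dots,m\}$, $\mathrm{supp}(v)=\{i:v_i\ne0\}$. For nonempty $P\subseteq[m]$, $\Delta_P=\{v\in\mathbb F_q^m:\mathrm{supp}(v)\subseteq P\}$, $\Delta_P^c=\mathbb F_q^m\setminus\Delta_P$. $A,B,C$ are nonempty subsets of $[m]$. Let $\mathcal N_2=\{(w_2+\omega,w_3,w_1)\in\mathbb F_q^{3m}: w_1\in\Delta_A^c,\ w_2\in\Delta_B,\ w_3\in\Delta_C,\ \omega\in\{\mathbf 0,w_1\}\}$ (closed under multiplication by $\mathbb F_q^*$), let $\overline{\mathcal N}_2$ be a set containing exactly one element of each class $\{\alpha x:\alpha\in\mathbb F_q^*\}$, $x\in\mathcal N_2$, and let $\mathcal C_{\overline{\mathcal N}_2}$ be the linear code over $\mathbb F_q$ spanned by the rows of the $3m\times|\overline{\mathcal N}_2|$ matrix whose columns are the elements of $\overline{\mathcal N}_2$. A code is projective if its dual has minimum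 distance at least $3$. *)

(* Defs.v *)
From HB Require Import structures.
From mathcomp Require Import all_boot all_order all_algebra all_field.
Set Implicit Arguments. Unset Strict Implicit. Unset Printing Implicit Defensive.
Import GRing.Theory.
Local Open Scope ring_scope.

Section Defs.
Variable F : finFieldType.

Definition supp (m : nat) (v : 'cV[F]_m) : {set 'I_m} := [set i | v i 0 != 0].

Definition Delta (m : nat) (P : {set 'I_m}) : {set 'cV[F]_m} :=
  [set v | supp v \subset P].

Definition N2 (m : nat) (A B C : {set 'I_m}) : {set 'cV[F]_(m + (m + m))} :=
  [set x | [exists w1 : 'cV[F]_m, exists w2 : 'cV[F]_m, exists w3 : 'cV[F]_m,
     exists om : 'cV[F]_m,
     [&& w1 \notin Delta A, w2 \in Delta B, w3 \in Delta C,
         (om == 0) || (om == w1) & x == col_mx (w2 + om) (col_mx w3 w1)]]].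

(* Nbar contains exactly one element of each class {a x : a in F^*}, x in N *)
Definition proj_reps (n : nat) (N Nbar : {set 'cV[F]_n}) : Prop :=
  Nbar \subset N /\
  forall x, x \in N ->
    #|[set y in Nbar | [exists a : F, (a != 0) && (y == a *: x)]]| = 1%N.

Definition colmx (n : nat) (S : {set 'cV[F]_n}) : 'M[F]_(n, #|S|) :=
  \matrix_(i, j) (enum_val j : 'cV[F]_n) i 0.

Definition code (n k : nat) (G : 'M[F]_(n, k)) : {set 'rV[F]_k} :=
  [set u *m G | u : 'rV[F]_n].

Definition wt (k : nat) (c : 'rV[F]_k) : nat := #|[set j | c 0 j != 0]|.

Definition dual_code (k : nat) (Cd : {set 'rV[F]_k}) : {set 'rV[F]_k} :=
  [set v | [forall c in Cd, c *m v^T == 0]].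

Definition projective (k : nat) (Cd : {set 'rV[F]_k}) : Prop :=
  forall v, v \in dual_code Cd -> v != 0 -> (3 <= wt v)%N.

End Defs.

(* Main.v *)
Require Import Defs.
From HB Require Import structures.
From mathcomp Require Import all_boot all_order all_algebra all_field.
From mathcomp Require Import zify.
Import GRing.Theory.
Local Open Scope ring_scope.
Set Implicit Arguments. Unset Strict Implicit.

Section Main.
Variable F : finFieldType.
Variable m : nat.
Variables (A C : {set 'I_m}) (j : 'I_m).
Hypothesis hj : forall i, (i \notin A) = (i == j).
Local Notation n := (m + (m + m))%N.
Definition iy (i : 'I_m) : 'I_n := lshift (m + m) i.
Definition iz (i : 'I_m) : 'I_n := rshift m (lshift m i).
Definition iw (i : 'I_m) : 'I_n := rshift m (rshift m i).
Definition Z := iz @: ~: C.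
Definition D2 := [set iy j; iw j].
Definition Fr := ~: (Z :|: D2).
Definition PN (x : 'cV[F]_n) : bool :=
  [&& x (iw j) 0 != 0, (x (iy j) 0 == 0) || (x (iy j) 0 == x (iw j) 0) &
      [forall k in Z, x k 0 == 0]].
Definition S := [set x | PN x].

Lemma iy_iw i i' : iy i != iw i'.
Proof. by apply/eqP => /(congr1 val) /=; have := ltn_ord i; have := ltn_ord i'; lia. Qed.
Lemma iz_iy i i' : iz i != iy i'.
Proof. by apply/eqP => /(congr1 val) /=; have := ltn_ord i; have := ltn_ord i'; lia. Qed.
Lemma iz_iw i i' : iz i != iw i'.
Proof. by apply/eqP => /(congr1 val) /=; have := ltn_ord i; have := ltn_ord i'; lia. Qed.
Lemma iz_inj : injective iz.
Proof. by move=> a b /(congr1 val) /= h; apply: val_inj => /=; lia. Qed.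

Lemma yZ : iy j \notin Z.
Proof. by apply/imsetP => -[i _ /eqP]; rewrite eq_sym (negbTE (iz_iy _ _)). Qed.
Lemma wZ : iw j \notin Z.
Proof. by apply/imsetP => -[i _ /eqP]; rewrite eq_sym (negbTE (iz_iw _ _)). Qed.

Lemma notA_j i : i \notin A -> i = j.
Proof. by rewrite hj => /eqP. Qed.

Lemma N2S : @N2 F m A A C = S.
Proof.
apply/setP => x; rewrite !inE; apply/idP/idP.
- case/existsP => w1 /existsP [w2 /existsP [w3 /existsP [om]]].
  case/and5P => hw1 hw2 hw3 hom /eqP ->.
  have jA : j \notin A by rewrite hj.
  have w2j : w2 j 0 = 0.
    apply/eqP; apply: contraR jA => h; rewrite inE in hw2; apply: (subsetP hw2).
    by rewrite inE.
  have w1j : w1 j 0 != 0.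
    move: hw1; rewrite inE => /subsetPn [i]; rewrite inE => hi hiA.
    by rewrite -(notA_j hiA).
  rewrite /PN /iy /iw /iz !(col_mxEu, col_mxEd) w1j /=.
  apply/andP; split.
    rewrite !mxE w2j add0r; by case/orP: hom => /eqP ->; rewrite ?mxE eqxx ?orbT.
  apply/forallP => k; apply/implyP => /imsetP [i hi ->].
  rewrite /iz !(col_mxEu, col_mxEd); rewrite inE in hi; apply: contraR hi => h.
  rewrite inE in hw3; apply: (subsetP hw3); by rewrite inE.
- case/and3P => hw hy /forallP hz.
  apply/existsP; exists (dsubmx (dsubmx x)).
  set om := if x (iy j) 0 == 0 then 0 else dsubmx (dsubmx x).
  apply/existsP; exists (usubmx x - om).
  apply/existsP; exists (usubmx (dsubmx x)).
  apply/existsP; exists om.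
  apply/and5P; split.
  + rewrite inE; apply/negP => /subsetP /(_ j); rewrite inE !mxE => /(_ hw).
    by rewrite -[_ \in _]negbK hj eqxx.
  + rewrite inE; apply/subsetP => i; rewrite inE; apply: contraR => hi.
    rewrite (notA_j hi) !mxE /om; case: ifP => [/eqP -> | h]; rewrite ?mxE ?subr0 //.
    by rewrite /iy in hy; rewrite h /= in hy; rewrite (eqP hy) /iw subrr.
  + rewrite inE; apply/subsetP => i; rewrite inE; apply: contraR => hi.
    rewrite !mxE; move/implyP: (hz (iz i)); rewrite imset_f ?inE //.
    by move=> /(_ isT).
  + by rewrite /om; case: (x (iy j) 0 == 0); rewrite ?eqxx ?orbT.
  + by rewrite subrK !vsubmxK.
Qed.

Definition ip (u : 'rV[F]_n) (x : 'cV[F]_n) := (u *m x) 0 0.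
Lemma ipE u x : ip u x = \sum_k u 0 k * x k 0.
Proof. by rewrite /ip mxE. Qed.

Lemma trE (x : 'cV[F]_n) s k k' :
  (x + s *: delta_mx k 0) k' 0 = x k' 0 + (if k' == k then s else 0).
Proof. by rewrite !mxE eqxx andbT; case: (k' == k); rewrite ?mulr1 ?mulr0. Qed.

Lemma ip_tr u (x : 'cV[F]_n) s k : ip u (x + s *: delta_mx k 0) = ip u x + s * u 0 k.
Proof.
rewrite /ip mulmxDr -scalemxAr -colE !mxE; congr (_ + _); by rewrite mulrC.
Qed.

Lemma ip_scale u (x : 'cV[F]_n) a : ip u (a *: x) = a * ip u x.
Proof. by rewrite /ip -scalemxAr mxE. Qed.

Lemma notFr (k : 'I_n) : (k \notin Fr) = [|| k \in Z, k == iy j | k == iw j].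
Proof. by rewrite /Fr !inE negbK orbA. Qed.

Lemma PN_ext (x x' : 'cV[F]_n) : (forall k, k \notin Fr -> x' k 0 = x k 0) -> PN x' = PN x.
Proof.
move=> h; rewrite /PN !h ?notFr ?eqxx ?orbT //.
congr [&& _, _ & _]; apply: eq_forallb_in => k hk; by rewrite h // notFr hk.
Qed.

Lemma S_tr (x : 'cV[F]_n) s k : x \in S -> k \in Fr -> x + s *: delta_mx k 0 \in S.
Proof.
move=> hx hk; rewrite inE in hx; rewrite inE (PN_ext (x := x)) // => k' hk'.
rewrite trE; case: eqP => [e|]; last by rewrite addr0.
by move: hk'; rewrite e hk.
Qed.

Lemma S_w (x : 'cV[F]_n) : x \in S -> x (iw j) 0 != 0.
Proof. by rewrite inE => /and3P []. Qed.

Lemma S_nz (x : 'cV[F]_n) : x \in S -> x != 0.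
Proof. by move/S_w; apply: contraNneq => ->; rewrite mxE. Qed.

Lemma S_Z (x : 'cV[F]_n) k : x \in S -> k \in Z -> x k 0 = 0.
Proof. by rewrite inE => /and3P [_ _ /forall_inP h] /h /eqP. Qed.

Lemma S_scale a (x : 'cV[F]_n) : a != 0 -> x \in S -> a *: x \in S.
Proof.
move=> ha; rewrite !inE => /and3P [hw hy /forall_inP hz].
rewrite /PN !mxE mulf_neq0 //=; apply/andP; split.
  by case/orP: hy => /eqP ->; rewrite ?mulr0 eqxx ?orbT.
by apply/forall_inP => k /hz /eqP; rewrite mxE => ->; rewrite mulr0.
Qed.

Hypothesis hF : #|F| = 4%N.
Variable Nbar : {set 'cV[F]_n}.
Hypothesis hNbar : proj_reps (@N2 F m A A C) Nbar.

Lemma hN : Nbar \subset S /\ forall x, x \in S ->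
    #|[set y in Nbar | [exists a : F, (a != 0) && (y == a *: x)]]| = 1%N.
Proof. by have := hNbar; rewrite /proj_reps N2S. Qed.

Lemma NbarS y : y \in Nbar -> y \in S.
Proof. exact: (subsetP hN.1). Qed.

Lemma classeq y y' b : y \in Nbar -> y' \in Nbar -> b != 0 -> y' = b *: y -> y' = y.
Proof.
move=> hy hy' hb e; have := hN.2 y (NbarS hy); move/eqP/cards1P => [z hz].
have : y \in [set z]. rewrite -hz inE hy; apply/existsP; exists 1; by rewrite oner_neq0 scale1r eqxx.
have : y' \in [set z]. rewrite -hz inE hy'; apply/existsP; exists b; by rewrite hb e eqxx.
by rewrite !inE => /eqP -> /eqP ->.
Qed.

Lemma classex x : x \in S -> exists2 b, b != 0 & b *: x \in Nbar.
Proof.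
move=> hx; have := hN.2 x hx; move/eqP/cards1P => [z hz].
have : z \in [set z] by rewrite inE.
rewrite -hz inE => /andP [hzN /existsP [b /andP [hb /eqP e]]].
by exists b; rewrite -?e.
Qed.

Lemma nz3 : #|[set a : F | a != 0]| = 3%N.
Proof.
have -> : [set a : F | a != 0] = [set~ 0] by apply/setP => a; rewrite !inE.
by rewrite cardsC1 hF.
Qed.

Lemma card3 (Q : pred 'cV[F]_n) : (forall a x, a != 0 -> Q (a *: x) = Q x) ->
  #|[set x in S | Q x]| = (3 * #|[set y in Nbar | Q y]|)%N.
Proof.
move=> hQ.
have -> : [set x in S | Q x] =
  (fun p : F * 'cV[F]_n => p.1 *: p.2) @: setX [set a : F | a != 0] [set y in Nbar | Q y].
  apply/setP => x; rewrite inE; apply/andP/imsetP.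
    case=> hx hqx; have [b hb hbx] := classex hx.
    exists (b^-1, b *: x); first by rewrite !inE invr_eq0 hb hbx hQ.
    by rewrite /= scalerA mulVf // scale1r.
  case=> -[a y] hp ->; move: hp; rewrite !inE /= => /and3P [ha hy hqy].
  by split; [have := S_scale ha (NbarS hy); rewrite inE | rewrite hQ].
rewrite card_in_imset ?cardsX ?nz3 //.
move=> [a y] [a' y']; rewrite !inE /= => /and3P [ha hy _] /and3P [ha' hy' _] e.
have ey : y' = y.
  apply: (classeq hy hy' (b := a'^-1 * a)); first by rewrite mulf_neq0 ?invr_eq0.
  by rewrite -scalerA e scalerA mulVf ?scale1r.
move: e; rewrite ey => /eqP; rewrite -subr_eq0 -scalerBl scaler_eq0 subr_eq0.
by rewrite (negbTE (S_nz (NbarS hy))) orbF => /eqP ->.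
Qed.

Lemma card_cv (D : {set 'I_n}) :
  #|[set x : 'cV[F]_n | [forall k, (k \notin D) ==> (x k 0 == 0)]]| = (#|F| ^ #|D|)%N.
Proof.
rewrite -(card_pffun_on 0 D F) -(card_imset _ (f := fun x : 'cV[F]_n => [ffun k => x k 0])).
  apply: eq_card => f.
  apply/imsetP/pffun_onP => [[x] | [hs _]].
    rewrite inE => /forallP hx ->; split => //; apply/subsetP => k.
    rewrite !inE ffunE; apply: contraR => hk; by move/implyP: (hx k) => /(_ hk)/eqP->.
  exists (\col_k f k); last by apply/ffunP => k; rewrite !ffunE mxE.
  rewrite inE; apply/forallP => k; apply/implyP => hk; rewrite mxE.
  by apply: contraR hk => hk; apply: (subsetP hs); rewrite inE.
move=> x y /ffunP h; apply/matrixP => i k; rewrite (ord1 k).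
by have := h i; rewrite !ffunE.
Qed.

Definition S0 := [set x in S | x (iy j) 0 == 0].
Definition S1 := [set x in S | x (iy j) 0 != 0].

Lemma yw : (iy j == iw j) = false.
Proof. exact: negbTE (iy_iw j j). Qed.
Lemma wy : (iw j == iy j) = false.
Proof. by rewrite eq_sym yw. Qed.

Lemma cardS0 : #|S0| = (3 * 4 ^ #|Fr|)%N.
Proof.
set T := [set x : 'cV[F]_n | [forall k, (k \notin Fr) ==> (x k 0 == 0)]].
have -> : S0 = (fun p : F * 'cV[F]_n => p.2 + p.1 *: delta_mx (iw j) 0) @:
     setX [set a : F | a != 0] T.
  apply/setP => x; apply/idP/imsetP.
    rewrite inE => /andP [hx hy].
    exists (x (iw j) 0, x - x (iw j) 0 *: delta_mx (iw j) 0); last by rewrite /= subrK.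
    rewrite !inE S_w //=; apply/forallP => k; apply/implyP.
    rewrite notFr -scaleNr trE => /or3P [hk | /eqP -> | /eqP ->].
    - by rewrite S_Z // add0r; case: (k =P iw j) => [e|//]; move: hk; rewrite e (negbTE wZ).
    - by rewrite yw addr0.
    - by rewrite eqxx addrN.
  case=> -[t y] hp ->; move: hp; rewrite !inE /= => /andP [ht /forallP hy].
  have hy0 k : k \notin Fr -> y k 0 = 0 by move=> hk; apply/eqP; exact: (implyP (hy k) hk).
  rewrite /PN !trE eqxx yw !hy0 ?notFr ?eqxx ?orbT // add0r addr0 ht eqxx /=.
  rewrite andbT;   apply/forall_inP => k hk; rewrite trE hy0 ?notFr ?hk // add0r.
  by case: (k =P iw j) => [e|//]; move: hk; rewrite e (negbTE wZ).
rewrite card_in_imset ?cardsX ?nz3 ?card_cv ?hF //.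
move=> [t y] [t' y']; rewrite !inE /= => /andP [ht /forallP hy] /andP [ht' /forallP hy'] e.
have hy0 (z : 'cV[F]_n) k : [forall k, (k \notin Fr) ==> (z k 0 == 0)] -> k \notin Fr -> z k 0 = 0.
  by move=> /forallP h hk; apply/eqP; exact: (implyP (h k) hk).
have et : t = t'.
  have := congr1 (fun z : 'cV[F]_n => z (iw j) 0) e; rewrite /= !trE eqxx.
  by rewrite !(hy0 _ (iw j)) ?notFr ?eqxx ?orbT ?add0r //; apply/forallP.
by move: e; rewrite et => /addIr ->.
Qed.

Lemma cardS1 : #|S1| = #|S0|.
Proof.
have -> : S1 = (fun x : 'cV[F]_n => x + x (iw j) 0 *: delta_mx (iy j) 0) @: S0.
  apply/setP => x; apply/idP/imsetP.
    rewrite inE => /andP [hx hy].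
    have hyw : x (iy j) 0 = x (iw j) 0.
      by move: hx; rewrite inE => /and3P [_ /orP [/eqP h|/eqP h] _] //; rewrite h eqxx in hy.
    exists (x - x (iw j) 0 *: delta_mx (iy j) 0).
      rewrite !inE -scaleNr /PN !trE eqxx wy addr0 hyw addrN eqxx /= andbT.
      move: hx; rewrite inE => /and3P [-> _ /forall_inP hz]; apply/forall_inP => k hk.
      rewrite trE; case: (k =P iy j) => [e|_]; first by move: hk; rewrite e (negbTE yZ).
      by rewrite addr0 hz.
    by rewrite -scaleNr trE wy addr0 scaleNr subrK.
  case=> y; rewrite inE => /andP [hy hy0] ->.
  rewrite !inE trE eqxx (eqP hy0) add0r S_w //= andbT.
  move: hy; rewrite inE => /and3P [hw _ /forall_inP hz].
  rewrite /PN !trE !eqxx wy addr0 (eqP hy0) add0r hw eqxx orbT /=.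
  apply/forall_inP => k hk; rewrite trE; case: (k =P iy j) => [e|_]; first by move: hk; rewrite e (negbTE yZ).
  by rewrite addr0 hz.
rewrite card_in_imset // => x x' hx hx' e.
have := congr1 (fun z : 'cV[F]_n => z (iw j) 0) e; rewrite /= !trE wy !addr0 => ew.
by move: e; rewrite ew => /addIr.
Qed.

Lemma cardS : #|S| = (#|S0| + #|S1|)%N.
Proof.
rewrite -(cardsID [set x : 'cV[F]_n | x (iy j) 0 == 0] S); congr addn.
  by apply: eq_card => x; rewrite !inE.
by apply: eq_card => x; rewrite !inE andbC.
Qed.

Lemma gen (u : 'rV[F]_n) k : k \in Fr -> u 0 k != 0 ->
  (4 * #|[set x in S | ip u x != 0%R]| = 3 * #|S|)%N.
Proof.
move=> hk hu.
set T0 := [set x in S | ip u x == 0].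
have h1 : #|[set x in S | ip u x != 0]| = (3 * #|T0|)%N.
  have -> : [set x in S | ip u x != 0] =
      (fun p : F * 'cV[F]_n => p.2 + (p.1 / u 0 k) *: delta_mx k 0) @: setX [set a : F | a != 0] T0.
    apply/setP => x; apply/idP/imsetP.
      rewrite inE => /andP [hx hi].
      exists (ip u x, x + (- (ip u x / u 0 k)) *: delta_mx k 0); last by rewrite /= scaleNr addrNK.
      rewrite in_setX /=; apply/andP; split; first by rewrite inE.
      by rewrite inE S_tr //= ip_tr mulNr divfK // subrr eqxx.
    case=> -[t y] hp ->; move: hp; rewrite in_setX /= => /andP [ht hy]; rewrite inE in ht.
    move: hy; rewrite inE => /andP [hy hi].
    by rewrite inE S_tr //= ip_tr (eqP hi) add0r divfK.
  rewrite card_in_imset ?cardsX ?nz3 //.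
  move=> [t y] [t' y']; rewrite !inE /= => /andP [_ /andP [_ hi]] /andP [_ /andP [_ hi']] e.
  have et : t = t'.
    have := congr1 (ip u) e; rewrite /= !ip_tr (eqP hi) (eqP hi') !add0r !divfK //.
  by move: e; rewrite et => /addIr ->.
have h2 : #|S| = (#|T0| + #|[set x in S | ip u x != 0%R]|)%N.
  rewrite -(cardsID [set x : 'cV[F]_n | ip u x == 0] S); congr addn.
    by apply: eq_card => x; rewrite !inE.
  by apply: eq_card => x; rewrite !inE andbC.
lia.
Qed.

Lemma deg_ip (u : 'rV[F]_n) (x : 'cV[F]_n) : (forall k, k \in Fr -> u 0 k = 0) -> x \in S ->
  ip u x = u 0 (iy j) * x (iy j) 0 + u 0 (iw j) * x (iw j) 0.
Proof.
move=> hu hx; rewrite ipE (bigD1 (iy j)) //= (bigD1 (iw j)) ?wy //= big1 ?addr0 //.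
move=> k /andP [hk1 hk2]; case: (boolP (k \in Fr)) => hk; first by rewrite hu ?mul0r.
by rewrite notFr (negbTE hk1) (negbTE hk2) !orbF in hk; rewrite S_Z ?mulr0.
Qed.

Lemma constcard (T : {set 'cV[F]_n}) (P : pred 'cV[F]_n) (b : bool) :
  (forall x, x \in T -> P x = b) -> #|[set x in T | P x]| = muln b #|T|.
Proof.
case: b => h.
  rewrite mul1n; apply: eq_card => x; rewrite inE; case: (boolP (x \in T)) => // /h ->.
  by [].
rewrite mul0n; apply/eqP; rewrite cards_eq0; apply/eqP/setP => x; rewrite !inE.
by case: (boolP (x \in T)) => // /h ->.
Qed.

Lemma degcount (u : 'rV[F]_n) : (forall k, k \in Fr -> u 0 k = 0) ->
  #|[set x in S | ip u x != 0]| =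
    muln (addn (u 0 (iw j) != 0) (u 0 (iy j) + u 0 (iw j) != 0)) #|S0|.
Proof.
move=> hu.
have -> : #|[set x in S | ip u x != 0]| =
   addn #|[set x in S0 | ip u x != 0]| #|[set x in S1 | ip u x != 0]|.
  rewrite -(cardsID [set x : 'cV[F]_n | x (iy j) 0 == 0] [set x in S | ip u x != 0]).
  congr addn; apply: eq_card => x; rewrite !inE.
    by rewrite andbAC.
  by case: (x (iy j) 0 != 0); case: (PN x).
rewrite mulnDl; congr addn; [|rewrite -cardS1]; apply: constcard => x; rewrite inE => /andP [hx hy].
  by rewrite deg_ip // (eqP hy) mulr0 add0r mulf_eq0 (negbTE (S_w hx)) orbF.
have hyw : x (iy j) 0 = x (iw j) 0.
  by move: hx; rewrite inE => /and3P [_ /orP [/eqP h|/eqP h] _] //; rewrite h eqxx in hy.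
by rewrite deg_ip // hyw -mulrDl mulf_eq0 (negbTE (S_w hx)) orbF.
Qed.

Local Notation G := (colmx Nbar).

Lemma mulGE (u : 'rV[F]_n) i jj : (u *m G) i jj = ip u (enum_val jj).
Proof. by rewrite (ord1 i) ipE !mxE; apply: eq_bigr => k _; rewrite mxE. Qed.

Lemma wtE (u : 'rV[F]_n) : wt (u *m G) = #|[set y in Nbar | ip u y != 0]|.
Proof.
rewrite /wt -(card_imset _ (@enum_val_inj _ (mem Nbar))); apply: eq_card => y.
rewrite inE; apply/imsetP/andP => [[jj] | [hy hi]].
  move=> hi ->; move: hi; rewrite inE /colmx !mxE ipE.
  under eq_bigr => k _ do rewrite mxE.
  move=> hi; split => //; exact: (@enum_valP _ (mem Nbar) jj).
exists (enum_rank_in hy y); rewrite ?enum_rankK_in //.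
rewrite inE /colmx !mxE; under eq_bigr => k _ do rewrite mxE.
by move: hi; rewrite ipE enum_rankK_in.
Qed.

Lemma wt3 (u : 'rV[F]_n) : (3 * wt (u *m G))%N = #|[set x in S | ip u x != 0%R]|.
Proof.
rewrite wtE card3 // => a x ha; by rewrite ip_scale mulf_eq0 negb_or ha.
Qed.

Lemma cardNbar : #|Nbar| = (2 * 4 ^ #|Fr|)%N.
Proof.
have := card3 (Q := predT) (fun _ _ _ => erefl).
have -> : [set x in S | predT x] = S by apply/setP => x; rewrite !inE andbT.
have -> : [set y in Nbar | predT y] = Nbar by apply/setP => x; rewrite !inE andbT.
rewrite cardS cardS1 cardS0; lia.
Qed.

Lemma wt_gen (u : 'rV[F]_n) k : k \in Fr -> u 0 k != 0 ->
  (2 * wt (u *m G) = 3 * 4 ^ #|Fr|)%N.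
Proof.
move=> hk hu; have := gen hk hu; rewrite -wt3 cardS cardS1 cardS0; lia.
Qed.

Lemma wt_deg (u : 'rV[F]_n) : (forall k, k \in Fr -> u 0 k = 0) ->
  wt (u *m G) = muln (addn (u 0 (iw j) != 0) (u 0 (iy j) + u 0 (iw j) != 0)) (4 ^ #|Fr|).
Proof.
move=> hu; have := degcount hu; rewrite -wt3 cardS0 mulnCA => /eqP.
by rewrite eqn_pmul2l // => /eqP.
Qed.

Definition U := [set u : 'rV[F]_n | [forall k in Z, u 0 k == 0]].

Lemma cardU : #|U| = (4 ^ (n - #|Z|))%N.
Proof.
have e : (#|~: Z| = n - #|Z|)%N by have := cardsC Z; rewrite card_ord; lia.
rewrite -e -hF -card_cv -(card_imset _ (@trmx_inj _ 1 n)); apply: eq_card => x.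
apply/imsetP/idP => [[u hu ->] | hx].
  rewrite inE; apply/forallP => k; apply/implyP; rewrite inE negbK mxE => hk.
  by move: hu; rewrite inE => /forall_inP /(_ k hk).
exists x^T; last by rewrite trmxK.
rewrite inE; apply/forall_inP => k hk; rewrite mxE.
by move: hx; rewrite inE => /forallP /(_ k) /implyP; apply; rewrite inE negbK.
Qed.

Definition projZ (u : 'rV[F]_n) : 'rV[F]_n := \row_k (if k \in Z then 0 else u 0 k).

Lemma projZ_U u : projZ u \in U.
Proof. by rewrite inE; apply/forall_inP => k hk; rewrite mxE hk. Qed.

Lemma projZ_G u : projZ u *m G = u *m G.
Proof.
apply/matrixP => i jj; rewrite !mulGE !ipE; apply: eq_bigr => k _; rewrite mxE.
case: ifP => // hk; rewrite S_Z ?mulr0 //; apply: NbarS; exact: (@enum_valP _ (mem Nbar) jj).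
Qed.

Definition phi (s b : F) : 'rV[F]_n :=
  (s - b) *: delta_mx 0 (iy j) + b *: delta_mx 0 (iw j).

Lemma phiE s b k : phi s b 0 k =
  (if k == iy j then s - b else 0) + (if k == iw j then b else 0).
Proof. by rewrite !mxE eqxx /=; case: (k == iy j); case: (k == iw j); rewrite ?mulr1 ?mulr0. Qed.

Lemma phi_U s b : phi s b \in U.
Proof.
rewrite inE; apply/forall_inP => k hk; rewrite phiE.
case: (k =P iy j) => [e|_]; first by move: hk; rewrite e (negbTE yZ).
case: (k =P iw j) => [e|_]; first by move: hk; rewrite e (negbTE wZ).
by rewrite addr0.
Qed.

Lemma phi_Fr s b k : k \in Fr -> phi s b 0 k = 0.
Proof.
move=> hk; rewrite phiE.
case: (k =P iy j) => [e|_]; first by move: hk; rewrite e -[_ \in _]negbK notFr eqxx orbT.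
case: (k =P iw j) => [e|_]; first by move: hk; rewrite e -[_ \in _]negbK notFr eqxx !orbT.
by rewrite addr0.
Qed.

Lemma phi_inj : injective (fun p : F * F => phi p.1 p.2).
Proof.
move=> [s b] [s' b'] /= e.
have eb : b = b' by have := congr1 (fun v : 'rV[F]_n => v 0 (iw j)) e; rewrite /= !phiE wy eqxx !add0r.
have := congr1 (fun v : 'rV[F]_n => v 0 (iy j)) e; rewrite /= !phiE yw eqxx !addr0 eb.
by move/subIr => ->.
Qed.

Lemma wt_phi s b : wt (phi s b *m G) = muln (addn (b != 0) (s != 0)) (4 ^ #|Fr|).
Proof.
rewrite wt_deg; last by move=> k; apply: phi_Fr.
by rewrite !phiE yw wy !eqxx !addr0 !add0r subrK. Qed.

Lemma classify u : u \in U ->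
  (exists2 k, k \in Fr & u 0 k != 0) \/ (exists s b, u = phi s b).
Proof.
move=> hu; case: (boolP [exists k in Fr, u 0 k != 0]) => [/exists_inP [k hk hk']|h].
  by left; exists k.
right; exists (u 0 (iy j) + u 0 (iw j)), (u 0 (iw j)).
apply/matrixP => i k; rewrite (ord1 i) phiE addrK.
case: (k =P iy j) => [->|hy]; first by rewrite yw addr0.
case: (k =P iw j) => [->|hw]; first by rewrite add0r.
rewrite addr0; case: (boolP (k \in Fr)) => hk.
  by apply/eqP; move: h; rewrite negb_exists_in => /forall_inP /(_ k hk); rewrite negbK.
move: hk; rewrite notFr; move/eqP: hy => /negbTE ->; move/eqP: hw => /negbTE ->.
by rewrite !orbF; move: hu; rewrite inE => /forall_inP h' /h' /eqP.
Qed.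

Lemma wt0 k (c : 'rV[F]_k) : (wt c == 0%N) = (c == 0).
Proof.
rewrite /wt cards_eq0; apply/eqP/eqP => [h|->].
  apply/matrixP => i jj; rewrite (ord1 i) mxE; apply/eqP.
  by move/setP: h => /(_ jj); rewrite !inE => /negbFE.
by apply/setP => jj; rewrite !inE mxE eqxx.
Qed.

Lemma X0 : (0 < 4 ^ #|Fr|)%N.
Proof. by rewrite expn_gt0. Qed.

Lemma U_inj : {in U &, injective (fun u => u *m G)}.
Proof.
move=> u u' hu hu' /= e; apply/eqP; rewrite -subr_eq0; apply/eqP.
have hv : u - u' \in U.
  rewrite inE; apply/forall_inP => k hk; rewrite !mxE.
  move: hu hu'; rewrite !inE => /forall_inP /(_ k hk) /eqP -> /forall_inP /(_ k hk) /eqP ->.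
  by rewrite subrr.
have hG : (u - u') *m G = 0 by rewrite mulmxBl e subrr.
have hw : wt ((u - u') *m G) = 0%N by apply/eqP; rewrite wt0 hG.
case: (classify hv) => [[k hk hk'] | [s [b eb]]].
  by have := wt_gen hk hk'; rewrite hw; have := X0; lia.
move: hw; rewrite eb wt_phi; have := X0.
case: (b =P 0) => [->|]; case: (s =P 0) => [->|] //=; try lia.
by move=> _ _; rewrite /phi !subrr !scale0r addr0.
Qed.

Lemma Cd_U : code G = (fun u => u *m G) @: U.
Proof.
apply/setP => c; apply/imsetP/imsetP => [[u _ ->]|[u _ ->]].
  by exists (projZ u); rewrite ?projZ_U ?projZ_G.
by exists u.
Qed.

Lemma cardCdP (P : pred 'rV[F]_#|Nbar|) :
  #|[set c in code G | P c]| = #|[set u in U | P (u *m G)]|.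
Proof.
rewrite -(card_in_imset (f := fun u => u *m G)); last first.
  by move=> u u' hu hu'; apply: U_inj; [move: hu | move: hu']; rewrite inE => /andP [].
apply: eq_card => c; rewrite inE Cd_U; apply/andP/imsetP.
  by case=> /imsetP [u hu ->] hp; exists u => //; rewrite inE hu.
by case=> u; rewrite inE => /andP [hu hp] ->; split => //; apply/imsetP; exists u.
Qed.

Lemma pairs1 : #|[set p : F * F | addn (p.2 != 0) (p.1 != 0) == 1%N]| = 6%N.
Proof.
have -> : #|[set p : F * F | addn (p.2 != 0) (p.1 != 0) == 1%N]| =
   #|setX [set~ (0:F)] [set 0] :|: setX [set 0] [set~ (0:F)]|.
  apply: eq_card => -[s b]; rewrite !inE /=.
  by case: (s == 0); case: (b == 0).
rewrite cardsU !cardsX !cardsC1 !cards1 hF.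
have -> : #|setX [set~ (0:F)] [set 0] :&: setX [set 0] [set~ (0:F)]| = 0%N.
  by apply: eq_card0 => -[s b]; rewrite !inE /=; case: (s == 0); rewrite ?andbF.
by [].
Qed.

Lemma pairs2 : #|[set p : F * F | addn (p.2 != 0) (p.1 != 0) == 2%N]| = 9%N.
Proof.
have -> : #|[set p : F * F | addn (p.2 != 0) (p.1 != 0) == 2%N]| = #|setX [set~ (0:F)] [set~ (0:F)]|.
  apply: eq_card => -[s b]; rewrite !inE /=.
  by case: (s == 0); case: (b == 0).
by rewrite cardsX !cardsC1 hF.
Qed.

Local Notation X := (4 ^ #|Fr|)%N.

Lemma Wcount (t : nat) (ht : (0 < t < 3)%N) :
  #|[set u in U | (u *m G != 0) && (wt (u *m G) == muln t X)]| =
  #|[set p : F * F | addn (p.2 != 0) (p.1 != 0) == t]|.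
Proof.
rewrite -(card_imset _ phi_inj); apply: eq_card => u; rewrite inE.
apply/andP/imsetP => [[hu /andP [_ /eqP hw]] | [[s b] hp ->]].
  case: (classify hu) => [[k hk hk'] | [s [b eb]]].
    have := wt_gen hk hk'; rewrite hw; have := X0; move: ht; case: (t) => [|[|[|t']]] //= _; lia.
  exists (s, b) => //; rewrite inE /=; move: hw; rewrite eb wt_phi.
  move/eqP; rewrite eqn_pmul2r ?X0 //.
split; first exact: phi_U.
move: hp; rewrite inE /= => /eqP ht'.
rewrite -wt0 wt_phi ht' eqxx andbT muln_eq0 negb_or.
by rewrite -!lt0n X0 andbT; case/andP: ht.
Qed.

Lemma W2count (w : nat) (hw : (2 * w = 3 * X)%N) :
  #|[set u in U | (u *m G != 0) && (wt (u *m G) == w)]| = (#|U| - 16)%N.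
Proof.
have hX := X0.
have cI : #|(fun p : F * F => phi p.1 p.2) @: setT| = 16%N.
  by rewrite card_imset ?cardsT ?card_prod ?hF //; exact: phi_inj.
have sI : (fun p : F * F => phi p.1 p.2) @: setT \subset U.
  by apply/subsetP => u /imsetP [p _ ->]; exact: phi_U.
rewrite -cI -(setIidPr sI) -cardsD; apply: eq_card => u.
case: (boolP (u \in U)) => hu; last first.
  by rewrite in_setD (negbTE hu) andbF in_set (negbTE hu).
rewrite in_setD hu andbT in_set hu /=; apply/andP/idP => [[_ /eqP hwu] | hn].
  apply/imsetP => -[[s b] _ eu]; move: hwu; rewrite eu wt_phi => hwu.
  move: hw; rewrite -hwu; case: (b != 0); case: (s != 0) => /=; lia.
case: (classify hu) => [[k hk hk'] | [s [b eb]]]; last first.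
  by exfalso; move/imsetP: hn; apply; exists (s, b).
have := wt_gen hk hk'; rewrite -hw => /eqP; rewrite eqn_pmul2l // => /eqP hwu.
by rewrite -wt0 hwu; split => //; apply/eqP => h; move: hw; rewrite h; lia.
Qed.

Lemma Wall u : u \in U -> u *m G != 0 ->
  [\/ wt (u *m G) = X, wt (u *m G) = (2 * X)%N | (2 * wt (u *m G) = 3 * X)%N].
Proof.
move=> hu hnz; case: (classify hu) => [[k hk hk'] | [s [b eb]]].
  by apply: Or33; exact: wt_gen hk hk'.
move: hnz; rewrite -wt0 eb wt_phi; case: (b != 0); case: (s != 0) => /= h.
- by apply: Or32.
- by apply: Or31; rewrite mul1n.
- by apply: Or31; rewrite mul1n.
- by [].
Qed.

Lemma card_code r k (M : 'M[F]_(r, k)) : #|code M| = (#|F| ^ \rank M)%N.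
Proof.
have -> : code M = [set v *m row_base M | v : 'rV[F]_(\rank M)].
  apply/setP => c; apply/imsetP/imsetP => [[u _ ->] | [v _ ->]].
    by exists (u *m col_base M); rewrite // -mulmxA mulmx_base.
  have : (v *m row_base M <= M)%MS by have := submxMl v (row_base M); rewrite eq_row_base.
  by case/submxP => D ->; exists D.
rewrite card_imset; last exact: row_free_inj (row_base_free M).
by rewrite card_mx mul1n.
Qed.

Lemma projG : projective (code G).
Proof.
move=> v hv hv0; rewrite leqNgt; apply/negP => hlt.
have hcol k : \sum_jj (enum_val jj : 'cV[F]_n) k 0 * v 0 jj = 0.
  have hc : row k G \in code G by rewrite rowE; apply/imsetP; exists (delta_mx 0 k).
  move: hv; rewrite inE => /forall_inP /(_ _ hc) /eqP /matrixP /(_ 0 0); rewrite !mxE => h; rewrite -[RHS]h.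
  apply: eq_bigr => jj _; rewrite !mxE /colmx; congr (_ * _).
set Sv := [set jj | v 0 jj != 0].
have hsum : \sum_(jj in Sv) v 0 jj *: (enum_val jj : 'cV[F]_n) = 0.
  apply/matrixP => k i; rewrite (ord1 i) summxE [RHS]mxE -[RHS](hcol k) big_mkcond /=.
  apply: eq_bigr => jj _; rewrite inE mxE; case: (v 0 jj =P 0) => [->|_] /=; by rewrite ?mulr0 // mulrC.
have hy (jj : 'I_#|Nbar|) : (enum_val jj : 'cV[F]_n) \in Nbar by exact: (@enum_valP _ (mem Nbar) jj).
have hw : wt v = #|Sv| by [].
have h0 : #|Sv| != 0%N by rewrite -hw wt0.
have [h1|h2] : #|Sv| = 1%N \/ #|Sv| = 2%N by move: hlt h0; rewrite hw; lia.
  move/eqP/cards1P: h1 => [j1 ej1]; move: hsum; rewrite ej1 big_set1 => /eqP.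
  have : j1 \in Sv by rewrite ej1 inE.
  rewrite inE scaler_eq0 => /negbTE ->; rewrite (negbTE (S_nz (NbarS (hy j1)))).
  by [].
move/eqP/cards2P: h2 => [j1 [j2 [hne ej]]].
have v1 : j1 \in Sv by rewrite ej !inE eqxx.
have v2 : j2 \in Sv by rewrite ej !inE eqxx orbT.
rewrite inE in v1; rewrite inE in v2.
move: hsum; rewrite ej big_setU1 ?inE //= big_set1 => /eqP; rewrite addr_eq0 => /eqP e.
have e2 : (enum_val j2 : 'cV[F]_n) = (- (v 0 j2)^-1 * v 0 j1) *: enum_val j1.
  by rewrite mulNr scaleNr -scalerA e scalerN opprK scalerA mulVf ?scale1r.
have := classeq (hy j1) (hy j2) _ e2; rewrite mulNr oppr_eq0 mulf_neq0 ?invr_eq0 // => /(_ isT).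
by move/enum_val_inj => e21; move: hne; rewrite e21 eqxx.
Qed.

Lemma cardZ : #|Z| = (m - #|C|)%N.
Proof. rewrite card_imset; last exact: iz_inj. by rewrite [#|~: C|]cardsCs setCK card_ord. Qed.

Lemma cardFr : #|Fr| = (n - (#|Z| + 2))%N.
Proof.
have := cardsC (Z :|: D2); rewrite card_ord cardsU cards2 iy_iw.
have -> : #|Z :&: D2| = 0%N.
  apply: eq_card0 => k; rewrite !inE.
  case: (boolP (k \in Z)) => //= hk; apply/negP => /orP [] /eqP e; move: hk; rewrite e.
    by rewrite (negbTE yZ).
  by rewrite (negbTE wZ).
rewrite -/Fr; lia.
Qed.

Lemma final (hm : (2 <= m)%N) (hc : (0 < #|C|)%N) :
  let theta := (2 ^ (4 * m + 2 * #|C| - 3))%N in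
  let G := colmx Nbar in
  let Cd := code G in
  projective Cd /\
  #|Nbar| = theta /\
  \rank G = (2 * m + #|C|)%N /\
  (forall c, c \in Cd -> c != 0 -> (theta %/ 2 <= wt c)%N) /\
  (exists2 c, c \in Cd & (c != 0) && (wt c == theta %/ 2)%N) /\
  (forall c, c \in Cd -> c != 0 ->
     wt c \in [:: theta %/ 2; 3 * theta %/ 4; theta]%N) /\
  #|[set c in Cd | (c != 0) && (wt c == theta %/ 2)%N]| = 6%N /\
  #|[set c in Cd | (c != 0) && (wt c == 3 * theta %/ 4)%N]| = (4 ^ (2 * m + #|C|) - 16)%N /\
  #|[set c in Cd | (c != 0) && (wt c == theta)%N]| = 9%N /\
  (theta %/ 2 + 3 * theta %/ 4 + theta = 9 * theta %/ 4)%N.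
Proof.
move=> theta G' Cd.
have hZ := cardZ; have hFr := cardFr.
have hcm : (#|C| <= m)%N by have := max_card C; rewrite card_ord.
set p := (4 ^ (#|Fr| - 1))%N.
have hXp : (4 ^ #|Fr| = 4 * p)%N by rewrite -expnS; congr (4 ^ _)%N; lia.
have hth : theta = (8 * p)%N.
  rewrite /theta (_ : (4 * m + 2 * #|C| - 3 = 3 + 2 * (#|Fr| - 1))%N); last by lia.
  by rewrite expnD expnM.
have hp : (0 < p)%N by rewrite expn_gt0.
have d2 : (theta %/ 2 = 4 * p)%N by rewrite hth (_ : (8 * p = 4 * p * 2)%N) ?mulnK //; lia.
have d34 : (3 * theta %/ 4 = 6 * p)%N by rewrite hth (_ : (3 * (8 * p) = 6 * p * 4)%N) ?mulnK //; lia.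
have d94 : (9 * theta %/ 4 = 18 * p)%N by rewrite hth (_ : (9 * (8 * p) = 18 * p * 4)%N) ?mulnK //; lia.
rewrite d2 d34 d94 hth.
have hCd : #|Cd| = #|U| by rewrite /Cd /G' Cd_U card_in_imset //; exact: U_inj.
split; first exact: projG.
split; first by rewrite cardNbar hXp; lia.
split.
  apply/eqP; rewrite -(eqn_exp2l _ _ (isT : (1 < 4)%N)) -{1}hF -card_code -/G' -/Cd hCd cardU.
  by rewrite eqn_exp2l //; apply/eqP; lia.
split.
  move=> c; rewrite /Cd /G' Cd_U => /imsetP [u hu ->] hnz.
  by case: (Wall hu hnz); rewrite hXp; lia.
split.
  exists (phi 1 0 *m G); first by rewrite /Cd /G' Cd_U; apply/imsetP; exists (phi 1 0) => //; exact: phi_U.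
  by rewrite -wt0 !wt_phi eqxx oner_neq0 /= hXp; apply/andP; split; apply/eqP; lia.
split.
  move=> c; rewrite /Cd /G' Cd_U => /imsetP [u hu ->] hnz; rewrite !inE.
  by case: (Wall hu hnz); rewrite hXp => h; apply/or3P; [apply: Or31|apply: Or33|apply: Or32];
     apply/eqP; lia.
split.
  rewrite /Cd /G' cardCdP (_ : (4 * p)%N = muln 1 (4 ^ #|Fr|)); last by rewrite hXp; lia.
  by rewrite Wcount // pairs1.
split.
  rewrite /Cd /G' cardCdP W2count ?cardU; last by rewrite hXp; lia.
  by congr (4 ^ _ - 16)%N; lia.
split; last by rewrite -!mulnDl.
rewrite /Cd /G' cardCdP (_ : (8 * p)%N = muln 2 (4 ^ #|Fr|)); last by rewrite hXp; lia.
by rewrite Wcount // pairs2.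
Qed.
End Main.

Theorem mainTheorem13 (F : finFieldType) (hF : #|F| = 4%N)
  (m : nat) (hm : (2 <= m)%N) (A B C : {set 'I_m})
  (hA0 : A != set0) (hB0 : B != set0) (hC0 : C != set0)
  (hBA : B = A) (hAcard : #|A| = (m - 1)%N)
  (Nbar : {set 'cV[F]_(m + (m + m))})
  (hNbar : proj_reps (@N2 F m A B C) Nbar) :
  let theta := (2 ^ (4 * m + 2 * #|C| - 3))%N in
  let G := colmx Nbar in
  let Cd := code G in
  projective Cd /\
  #|Nbar| = theta /\
  \rank G = (2 * m + #|C|)%N /\
  (* minimum distance theta/2 *)
  (forall c, c \in Cd -> c != 0 -> (theta %/ 2 <= wt c)%N) /\
  (exists2 c, c \in Cd & (c != 0) && (wt c == theta %/ 2)%N) /\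
  (* exactly three nonzero weights *)
  (forall c, c \in Cd -> c != 0 ->
     wt c \in [:: theta %/ 2; 3 * theta %/ 4; theta]%N) /\
  #|[set c in Cd | (c != 0) && (wt c == theta %/ 2)%N]| = 6%N /\
  #|[set c in Cd | (c != 0) && (wt c == 3 * theta %/ 4)%N]| = (4 ^ (2 * m + #|C|) - 16)%N /\
  #|[set c in Cd | (c != 0) && (wt c == theta)%N]| = 9%N /\
  (theta %/ 2 + 3 * theta %/ 4 + theta = 9 * theta %/ 4)%N.
Proof.
subst B.
have hc : (0 < #|C|)%N by rewrite card_gt0.
have h1 : #|~: A| = 1%N by rewrite [#|~: A|]cardsCs setCK card_ord hAcard; lia.
move/eqP/cards1P: h1 => [j hj].
have hj' i : (i \notin A) = (i == j) by rewrite -in_setC hj inE.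
exact: (final hj' hF hNbar hm hc).
Qed.
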